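(* Every finite $2$-group $G$ is mixable, and $\mathrm{mixlen}(G)=\log_2|G|$.
   Context: For a finite group $G$, a random subproduct is a random element $g_1^{\epsilon_1}\cdots g_k^{\epsilon_k}$ where $g_1,\dots,g_k\in G$ are fixed and $\epsilon_1,\dots,\epsilon_k$ are independent Bernoulli random variables with $\epsilon_i\sim\mathrm{Ber}(p_i)$, $p_i\in[0,1]$. $G$ is called mixable if some random subproduct is distributed exactly uniformly on $G$; the sequence $(g_1,p_1),\dots,(g_k,p_k)$ is then a mixing sequence of length $k$. The mixing length $\mathrm{mixlen}(G)$ is the minimal length of a mixing sequence of $G$. *)

(* Defs.v *)
From mathcomp Require Import all_boot all_order all_algebra all_fingroup all_solvable.
From mathcomp Require Import reals.
Set Implicit Arguments. Unset Strict Implicit. Unset Printing Implicit Defensive.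
Import GRing.Theory Num.Theory.

(* Probability that the random subproduct g_0^{e_0} ... g_{k-1}^{e_{k-1}},
   with e_i ~ Ber(p_i) independent, equals x. *)
Definition subprod (gT : finGroupType) (k : nat) (g : 'I_k -> gT)
  (e : {ffun 'I_k -> bool}) : gT :=
  (\prod_(i < k) (if e i then g i else 1))%g.

Definition subprod_prob (R : realType) (gT : finGroupType) (k : nat)
  (g : 'I_k -> gT) (p : 'I_k -> R) (x : gT) : R :=
  (\sum_(e : {ffun 'I_k -> bool} | subprod g e == x)
     \prod_(i < k) (if e i then p i else 1 - p i))%R.

Definition mixing_seq (R : realType) (gT : finGroupType) (G : {group gT})
  (k : nat) (g : 'I_k -> gT) (p : 'I_k -> R) : Prop :=
  [/\ (forall i, g i \in G),
      (forall i, (0 <= p i <= 1)%R) &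
      (forall x, x \in G -> subprod_prob g p x = ((#|G|%:R)^-1)%R :> R)].

Definition has_mixing_seq_of_length (R : realType) (gT : finGroupType)
  (G : {group gT}) (k : nat) : Prop :=
  exists (g : 'I_k -> gT) (p : 'I_k -> R), mixing_seq G g p.

Definition mixable (R : realType) (gT : finGroupType) (G : {group gT}) : Prop :=
  exists k, has_mixing_seq_of_length R G k.

Definition is_mixlen (R : realType) (gT : finGroupType) (G : {group gT})
  (n : nat) : Prop :=
  has_mixing_seq_of_length R G n /\
  (forall k, has_mixing_seq_of_length R G k -> (n <= k)%N).

(* Main.v *)
Require Import Defs.
From mathcomp Require Import all_boot all_order all_algebra all_fingroup all_solvable.
From mathcomp Require Import reals.
From mathcomp Require Import zify.
Import GRing.Theory Num.Theory.

Section Aux.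
Variable gT : finGroupType.

Lemma eq_subprod k (g1 g2 : 'I_k -> gT) e : g1 =1 g2 -> subprod g1 e = subprod g2 e.
Proof. by move=> eg; rewrite /subprod; apply: eq_bigr => i _; rewrite eg. Qed.

Lemma subprodS m (g : 'I_m.+1 -> gT) e :
  subprod g e = ((if e ord0 then g ord0 else 1) *
     subprod (fun i => g (lift ord0 i)) [ffun i => e (lift ord0 i)])%g.
Proof. by rewrite /subprod big_ord_recl; congr (_ * _)%g; apply: eq_bigr => i _; rewrite ffunE. Qed.

Lemma subprod_in k (g : 'I_k -> gT) (H : {group gT}) e :
  (forall i, g i \in H) -> subprod g e \in H.
Proof.
move=> gH; rewrite /subprod; apply: group_prod => i _.
by case: ifP => _; [exact: gH | exact: group1].
Qed.

Lemma exists_basis n (G : {group gT}) : #|G| = (2 ^ n)%N ->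
  exists g : 'I_n -> gT, (forall i, g i \in G) /\ injective (subprod g).
Proof.
elim: n G => [|m IH] G cG.
  exists (fun _ => 1%g); split=> [i|e1 e2 _]; first exact: group1.
  by apply/ffunP => -[].
have pG : (2.-group G)%g by rewrite /pgroup cG pnatX pnat_id.
have [L [sLG nLG cL]] : exists L : {group gT}, ([/\ L \subset G, L <| G & #|L| = (2 ^ m)%N])%g.
  by apply: normal_pgroup pG (normal_refl G) _; rewrite cG pfactorK.
have [h [hL hinj]] := IH L cL.
have nGL : ~~ (G \subset L).
  apply/negP => /subset_leq_card; rewrite cG cL leq_exp2l //; lia.
have [g0 g0G g0L] := subsetPn nGL.
exists (fun i => if unlift ord0 i is Some j then h j else g0).
split.
  by move=> i; case: unliftP => [j _|_] //; apply: (subsetP sLG).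
move=> e1 e2; rewrite !subprodS unlift_none.
rewrite !(@eq_subprod _ _ h); last by move=> i; rewrite liftK.
2: by move=> i; rewrite liftK.
set t1 := [ffun i => e1 (lift ord0 i)]; set t2 := [ffun i => e2 (lift ord0 i)].
have a1L := @subprod_in _ _ _ t1 hL; have a2L := @subprod_in _ _ _ t2 hL.
move=> E.
have key : e1 ord0 = e2 ord0 /\ t1 = t2.
  move: E; case: (e1 ord0) (e2 ord0) => -[] /=.
  - by move/mulgI/hinj ->.
  - move=> E; case/negP: g0L; rewrite mul1g in E.
    by rewrite -(mulgK (subprod h t1) g0) E groupM ?groupV.
  - rewrite mul1g => E; case/negP: g0L.
    by rewrite -(mulgK (subprod h t2) g0) -E groupM ?groupV.
  - by rewrite !mul1g => /hinj ->.
case: key => E0 Et; apply/ffunP => i; case: (unliftP ord0 i) => [j ->|->] //.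
by move: Et => /ffunP/(_ j); rewrite !ffunE.
Qed.

End Aux.

Theorem mainTheorem1 (R : realType) (gT : finGroupType) (G : {group gT}) :
  (2.-group G)%g -> mixable R G /\ is_mixlen R G (logn 2 #|G|).
Proof.
move=> pG; set n := logn 2 #|G|.
have cG : #|G| = (2 ^ n)%N := card_pgroup pG.
have [g [gG ginj]] := @exists_basis _ _ G cG.
have surj : forall x, x \in G -> exists e, subprod g e = x.
  move=> x xG.
  have : x \in [set subprod g e | e : {ffun 'I_n -> bool}].
    suff -> : [set subprod g e | e : {ffun 'I_n -> bool}] = G :> {set gT} by [].
    apply/eqP; rewrite eqEcard; apply/andP; split.
      by apply/subsetP => y /imsetP [e _ ->]; apply: subprod_in.
    by rewrite card_imset // card_ffun card_bool card_ord cG.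
  by case/imsetP => e _ ->; exists e.
have mix : mixing_seq G g (fun _ => (2%:R^-1 : R)%R).
  split => //.
    by move=> i; rewrite invr_ge0 ler0n /= invf_le1 ?ltr0n ?ler1n.
  move=> x xG; have [e0 <-] := surj x xG.
  rewrite /subprod_prob (eq_bigl (pred1 e0)); last first.
    by move=> e; rewrite /= inj_eq.
  rewrite big_pred1_eq.
  have h2 : (1 - 2%:R^-1 = 2%:R^-1 :> R)%R.
    by rewrite {1}(splitr 1) mul1r addrK.
  rewrite (eq_bigr (fun _ => 2%:R^-1)%R); last by move=> i _; case: ifP.
  by rewrite prodr_const card_ord cG natrX exprVn.
have ex : has_mixing_seq_of_length R G n by exists g, (fun _ => 2%:R^-1)%R.
split; first by exists n.
split => // k [g' [p' [g'G p01 unif]]].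
have sub : G \subset [set subprod g' e | e : {ffun 'I_k -> bool}].
  apply/subsetP => x xG; have := unif x xG; rewrite /subprod_prob.
  case: (pickP (fun e => subprod g' e == x)) => [e /eqP <- _|H0].
    by apply/imsetP; exists e.
  rewrite big_pred0 // => /esym/eqP.
  by rewrite invr_eq0 pnatr_eq0 eqn0Ngt cardG_gt0.
have := subset_leq_card sub.
move/leq_trans/(_ (leq_imset_card _ _)).
by rewrite card_ffun card_bool card_ord cG leq_exp2l.
Qed.
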